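(* Let $\Phi$ be a Young function, $\varphi\in\mathcal{G}^{\rm dec}_2$, $x_0\in\mathbb{R}$, and let $\psi:\mathbb{R}\to\mathbb{R}$ be a diffeomorphism. Let $\alpha_1(x_0)=|\psi'(x_0)|>0$ be the singular value of $D\psi(x_0)$, and assume that the map $x\mapsto\alpha_1(x_0)x$ induces a bounded composition operator on $\mathcal{M}_\Phi^\varphi(\mathbb{R})$ with operator norm $M$. Then $\varphi(\alpha_1(x_0))\lesssim M$, with implicit constant independent of $x_0$ and $M$.
   Context: A Young function is a convex $\Phi:[0,\infty)\to[0,\infty)$ with $\Phi(0)=0$, $\lim_{t\to\infty}\Phi(t)=\infty$. $\mathcal{G}^{\rm dec}_2$ is the set of $\varphi:(0,\infty)\to(0,\infty)$ that are almost decreasing (there is $C>0$ with $C\varphi(r)\ge\varphi(s)$ for $r<s$), submultiplicative ($\varphi(rs)\le C\varphi(r)\varphi(s)$), satisfy $\lim_{r\to0}\varphi(r)=\infty$, $\lim_{r\to\infty}\varphi(r)=0$, and $\varphi(1/r)\le C/\varphi(r)$ for some $C>0$. $g\lesssim h$ means $g\le Ch$ for a constant $C>0$. For an interval $B=B(a,r)=(a-r,a+r)$: $\|f\|_{\Phi,B}=\inf\{\lambda>0:\frac1{|B|}\int_B\Phi(|f|/\lambda)\le1\}$, $\|f\|_{\mathcal{M}_\Phi^\varphi}=\sup_{a\in\mathbb{R},r>0}\frac1{\varphi(r)}\|f\|_{\Phi,B(a,r)}$. A diffeomorphism is a bijection with $\psi,\psi^{-1}$ differentiable. *)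

(* Defs.v *)
From HB Require Import structures.
From mathcomp Require Import all_boot all_order all_algebra.
From mathcomp Require Import all_classical all_reals all_analysis.
Set Implicit Arguments. Unset Strict Implicit. Unset Printing Implicit Defensive.
Import Order.TTheory GRing.Theory Num.Theory.
Import numFieldNormedType.Exports.
Local Open Scope classical_set_scope.
Local Open Scope ring_scope.

Section Defs.
Variable R : realType.

(* Young function: convex Phi : [0,oo) -> [0,oo), Phi 0 = 0, Phi t -> oo.
   Represented as Phi : R -> R; only its values on [0,oo) matter. *)
Definition young_function (Phi : R -> R) : Prop :=
  [/\ (forall t, 0 <= t -> 0 <= Phi t),
      (forall s t l, 0 <= s -> 0 <= t -> 0 <= l <= 1 ->
          Phi (l * s + (1 - l) * t) <= l * Phi s + (1 - l) * Phi t),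
      Phi 0 = 0 &
      Phi t @[t --> +oo] --> +oo].

(* The class G^dec_2 of phi : (0,oo) -> (0,oo); phi : R -> R, only its values
   on (0,oo) matter. *)
Definition G2dec (phi : R -> R) : Prop :=
  (forall r, 0 < r -> 0 < phi r) /\
  [/\ (exists2 C, 0 < C & forall r s, 0 < r -> r < s -> phi s <= C * phi r),
      (exists2 C, 0 < C & forall r s, 0 < r -> 0 < s ->
          phi (r * s) <= C * phi r * phi s),
      phi r @[r --> 0^'+] --> +oo,
      phi r @[r --> +oo] --> 0 &
      (exists2 C, 0 < C & forall r, 0 < r -> phi r^-1 <= C / phi r)].

Definition ball_int (a r : R) : set R := `](a - r), (a + r)[%classic.

(* Luxemburg average norm ||f||_{Phi,B(a,r)} (value +oo if no lambda works). *)
Definition lux_norm (Phi : R -> R) (f : R -> R) (a r : R) : \bar R :=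
  ereal_inf [set (l%:E) | l in [set l : R | 0 < l /\
     (((2 * r)^-1)%:E *
       \int[@lebesgue_measure R]_(x in ball_int a r) (Phi (`|f x| / l))%:E
       <= 1)%E]].

Definition morrey_norm (Phi phi : R -> R) (f : R -> R) : \bar R :=
  ereal_sup [set (((phi ar.2)^-1)%:E * lux_norm Phi f ar.1 ar.2)%E
            | ar in [set ar : R * R | 0 < ar.2]].

Definition in_morrey (Phi phi : R -> R) (f : R -> R) : Prop :=
  measurable_fun [set: R] f /\ (morrey_norm Phi phi f < +oo)%E.

Definition comp_op_bound (Phi phi : R -> R) (T : R -> R) (M : R) : Prop :=
  forall f, in_morrey Phi phi f ->
    in_morrey Phi phi (f \o T) /\
    (morrey_norm Phi phi (f \o T) <= M%:E * morrey_norm Phi phi f)%E.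

Definition comp_op_norm (Phi phi : R -> R) (T : R -> R) (M : R) : Prop :=
  [/\ 0 <= M, comp_op_bound Phi phi T M &
      forall M', comp_op_bound Phi phi T M' -> M <= M'].

Definition diffeomorphism (psi : R -> R) : Prop :=
  exists psiinv : R -> R,
    [/\ cancel psi psiinv, cancel psiinv psi,
        (forall x, derivable psi x 1) & (forall x, derivable psiinv x 1)].
End Defs.

(* Main.v *)
Require Import Defs.
From HB Require Import structures.
From mathcomp Require Import all_boot all_order all_algebra.
From mathcomp Require Import all_classical all_reals all_analysis.
From mathcomp Require Import measurable_realfun.
From mathcomp Require Import ring lra.
Import Order.TTheory GRing.Theory Num.Theory.
Import numFieldNormedType.Exports.
Local Open Scope classical_set_scope.
Local Open Scope ring_scope.

Lemma scale_ge0_integral (R : realType) (a : R) (D : set R) (G : R -> \bar R) :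
  0 < a -> measurable D -> measurable_fun (D : set R) G -> (forall x, D x -> (0 <= G x)%E) ->
  (\int[lebesgue_measure]_(x in D) G x =
  a%:E * \int[lebesgue_measure]_(x in (fun x => (a * x)%R) @^-1` D) G (a * x)%R)%E.
Proof.
move=> a0 mD mG G0.
have mT : measurable_fun setT (fun x : R => a * x).
  by apply: measurable_funM => //; exact: measurable_id.
have a0' : 0 <= a by exact: ltW.
pose k : {nonneg R} := NngNum a0'.
pose T := (fun x : R => a * x) : R -> measurableTypeR R.
have E A : measurable A -> lebesgue_measure A =
    mscale k (pushforward lebesgue_measure T) A.
  apply: lebesgue_measure_unique => _ [[x y] _ <-].
  transitivity (k%:num%:E * lebesgue_measure (T @^-1` `]x, y]%classic))%E; last by [].
  have -> : T @^-1` `]x, y]%classic = `](x / a), (y / a)]%classic.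
    by apply/seteqP; split => z /=; rewrite !in_itv /= /T ltr_pdivrMr // ler_pdivlMr //
      [z * a]mulrC.
  rewrite !lebesgue_measure_itv /= !lte_fin ltr_pM2r ?invr_gt0 //.
  case: ifP => _; last by rewrite mule0.
  by rewrite -EFinB -EFinM; congr (_%:E); field; rewrite gt_eqF.
rewrite (eq_measure_integral (mscale k (pushforward lebesgue_measure T))); last first.
  by move=> A mA _; exact: E.
rewrite ge0_integral_mscale //.
  rewrite ge0_integral_pushforward //.
  by move=> y; rewrite inE; exact: G0.
Qed.

Lemma young_mono (R : realType) (Phi : R -> R) : young_function Phi ->
  forall s t, 0 <= s -> s <= t -> Phi s <= Phi t.
Proof.
case=> h0 hc h00 _ s t s0 st.
have t0 : 0 <= t := le_trans s0 st.
have [t00|tn0] := eqVneq t 0.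
  have -> : s = t by apply/eqP; rewrite eq_le st t00 s0.
  exact: lexx.
have hl : 0 <= s / t <= 1.
  by rewrite divr_ge0 //= ler_pdivrMr ?mul1r // lt_neqAle eq_sym tn0.
have := hc t 0 (s / t) t0 (lexx 0) hl.
rewrite mulr0 addr0 h00 mulr0 addr0 divfK // => h.
by apply: (le_trans h); rewrite ler_piMl //; [exact: h0 | case/andP: hl].
Qed.

Arguments young_mono {R Phi}.

Lemma meas_G (R : realType) (Phi : R -> R) (f : R -> R) (l : R) (D : set R) :
  young_function Phi -> measurable_fun [set: R] f -> measurable D -> 0 < l ->
  measurable_fun D (fun y => (Phi (`|f y| / l))%:E).
Proof.
move=> hY mf mD l0.
pose P' t := Phi (Num.max t 0).
have -> : (fun y => (Phi (`|f y| / l))%:E) = EFin \o (P' \o (fun y => `|f y| / l)).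
  apply/funext => y /=; rewrite /P'; congr (Phi _ )%:E.
  by apply/esym/max_idPl; rewrite divr_ge0 // ltW.
apply/measurable_EFinP.
apply: (measurable_funS measurableT) => //.
apply: measurableT_comp.
  apply: nondecreasing_measurable => // x y xy.
  rewrite /P'; apply: (young_mono hY).
    by rewrite le_max lexx orbT.
  by rewrite ge_max !le_max xy lexx orbT.
apply: measurable_funM => //.
exact: measurableT_comp.
Qed.

Lemma lux_scale (R : realType) (Phi : R -> R) (f : R -> R) (a c r : R) :
  young_function Phi -> measurable_fun [set: R] f -> 0 < a -> 0 < r ->
  lux_norm Phi (f \o (fun x => a * x)) c r = lux_norm Phi f (a * c) (a * r).
Proof.
move=> hY mf a0 r0.
have key l : 0 < l ->
  (((2 * r)^-1)%:E * \int[lebesgue_measure]_(x in ball_int c r)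
       (Phi (`|(f \o (fun x => a * x)) x| / l))%:E =
   ((2 * (a * r))^-1)%:E * \int[lebesgue_measure]_(x in ball_int (a * c) (a * r))
       (Phi (`|f x| / l))%:E)%E.
  move=> l0.
  rewrite (@scale_ge0_integral R a (ball_int (a * c) (a * r))) //; last 3 first.
  - exact: measurable_itv.
  - by apply: meas_G => //; exact: measurable_itv.
  - by move=> x _; rewrite lee_fin; case: hY => h0 _ _ _; apply: h0; rewrite divr_ge0 // ltW.
  have -> : (fun x => (a * x)%R) @^-1` ball_int (a * c) (a * r) = ball_int c r.
    apply/seteqP; split => z /=; rewrite /ball_int /= !in_itv /=
      -mulrBr -mulrDr !ltr_pM2l //.
  rewrite muleA -EFinM; congr (_%:E * _)%E.
  by field; rewrite !gt_eqF.
rewrite /lux_norm; congr ereal_inf; apply/seteqP; split => _ [l [l0 hl] <-];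
  exists l => //; split => //; by [rewrite -key | rewrite key].
Qed.

Theorem lemma4p10 (R : realType) (Phi phi : R -> R) :
  young_function Phi -> G2dec phi ->
  exists2 C : R, 0 < C &
    forall (psi : R -> R) (x0 M : R),
      diffeomorphism psi ->
      0 < `|derive1 psi x0| ->
      comp_op_norm Phi phi (fun x => `|derive1 psi x0| * x) M ->
      phi `|derive1 psi x0| <= C * M.
Proof.
move=> hY [phipos [_ [K K0 Ksub] _ _ [Ci Ci0 Cinv]]].
exists (K * Ci); first exact: mulr_gt0.
move=> psi x0 M _.
set a := `|derive1 psi x0| => a0 [M0 Mbound Mmin].
pose T := fun x : R => a * x.
have lux0 g b s : (0 <= lux_norm Phi g b s)%E.
  by apply: le_ereal_inf_tmp => _ [l [l0 _] <-]; rewrite lee_fin ltW.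
have mor0 g : (0 <= morrey_norm Phi phi g)%E.
  apply: le_ereal_sup_tmp; exists (((phi 1)^-1)%:E * lux_norm Phi g 0 1)%E.
    by exists (0, 1) => //=.
  by apply: mule_ge0 => //; rewrite lee_fin invr_ge0 ltW // phipos.
have [f [hf Nf]] : exists f, in_morrey Phi phi f /\ (0 < morrey_norm Phi phi f)%E.
  apply: contrapT => hno.
  have hb : comp_op_bound Phi phi T (M - 1).
    move=> g hg; have [hgT le] := Mbound g hg; split => //.
    have g0 : morrey_norm Phi phi g = 0%E.
      apply/eqP; rewrite eq_le mor0 andbT leNgt; apply/negP => gp.
      by apply: hno; exists g; split.
    by rewrite g0 mule0; move: le; rewrite g0 mule0.
  have := Mmin _ hb; lra.
have [hfm hfin] := hf.
have [hfT leT] := Mbound f hf.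
pose c := K * Ci / phi a.
have c0 : 0 <= c by rewrite /c divr_ge0 ?mulr_ge0 ?ltW ?phipos.
have key : (morrey_norm Phi phi f <= c%:E * morrey_norm Phi phi (f \o T))%E.
  apply: ge_ereal_sup => _ [[b s] /= s0 <-].
  have sa0 : 0 < s / a by exact: divr_gt0.
  have := @lux_scale R Phi f a (b / a) (s / a) hY hfm a0 sa0.
  have e1 : a * (b / a) = b by rewrite mulrC divfK // gt_eqF.
  have e2 : a * (s / a) = s by rewrite mulrC divfK // gt_eqF.
  rewrite e1 e2 => hl.
  apply: (@le_trans _ _ (c%:E * (((phi (s / a))^-1)%:E *
     lux_norm Phi (f \o T) (b / a) (s / a)))%E).
    rewrite hl muleA -EFinM; apply: lee_wpmul2r => //; rewrite lee_fin.
    have hp : phi (s / a) <= c * phi s.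
      apply: (le_trans (Ksub s a^-1 s0 _)); first by rewrite invr_gt0.
      have -> : c * phi s = K * phi s * (Ci / phi a) by rewrite /c; ring.
      apply: ler_wpM2l; first by rewrite mulr_ge0 ?ltW ?phipos.
      exact: Cinv.
    have ps0 := phipos _ s0; have psa0 := phipos _ sa0.
    rewrite -div1r ler_pdivrMr // mulrAC ler_pdivlMr // mul1r.
    exact: hp.
  apply: lee_wpmul2l; first by rewrite lee_fin.
  apply: ereal_sup_ubound; exists (b / a, s / a) => //=.
have Nfin : morrey_norm Phi phi f \is a fin_num by rewrite ge0_fin_numE.
have le2 : (c%:E * morrey_norm Phi phi (f \o T) <=
            c%:E * (M%:E * morrey_norm Phi phi f))%E.
  by apply: lee_wpmul2l; rewrite ?lee_fin.
have := le_trans key le2.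
move: Nf; rewrite -(fineK Nfin); set n := fine _ => n0.
rewrite -!EFinM lee_fin lte_fin in n0 * => hn.
have h1 : 1 <= c * M by rewrite -(ler_pM2r n0) mul1r -mulrA.
have pa0 := phipos _ a0.
have := ler_wpM2l (ltW pa0) h1; rewrite mulr1 => h; apply: (le_trans h).
by rewrite /c le_eqVlt; apply/orP; left; apply/eqP; field; rewrite gt_eqF.
Qed.
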